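(* Let $n\ge1$, let $f_1,\dots,f_n:\mathbb{R}^d\to\mathbb{R}$ be $L$-smooth (i.e. $\|\nabla f_i(x)-\nabla f_i(y)\|\le L\|x-y\|$ for all $x,y$), and $f=\frac1n\sum_i f_i$. Let $x_0,\dots,x_T$ and $\nabla_0,\dots,\nabla_{T-1}$ be the iterates and gradient estimators produced by AdaSpider (described in the context) with input $x_0$, $\beta_0>0$, $G_0>0$. Then there is an absolute constant $C>0$ such that \[ \mathbb{E}\Big[\sum_{t=0}^{T-1}\|\nabla_t-\nabla f(x_t)\|\Big]\le C\,\frac{L\,n^{1/4}\sqrt T}{\beta_0}\sqrt{\log\!\Big(1+nT\Big(\frac{L}{\beta_0G_0}+\frac{\|\nabla f(x_0)\|}{G_0}\Big)\Big)}. \]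
   Context: $\|\cdot\|$ is the Euclidean norm. AdaSpider: input $x_0\in\mathbb{R}^d$, $\beta_0>0$, $G_0>0$, horizon $T\ge1$. For $t=0,1,\dots,T-1$: if $t \bmod n=0$, set $\nabla_t:=\nabla f(x_t)$; otherwise pick $i_t\in\{1,\dots,n\}$ uniformly at random (independently of the past) and set $\nabla_t:=\nabla f_{i_t}(x_t)-\nabla f_{i_t}(x_{t-1})+\nabla_{t-1}$. Then set $\gamma_t:=1\big/\big(n^{1/4}\beta_0\sqrt{n^{1/2}G_0^2+\sum_{s=0}^t\|\nabla_s\|^2}\big)$ and $x_{t+1}:=x_t-\gamma_t\nabla_t$. *)

(* Defs.v *)
From HB Require Import structures.
From mathcomp Require Import all_boot all_order all_algebra.
From mathcomp Require Import all_classical all_reals all_analysis.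
Set Implicit Arguments. Unset Strict Implicit. Unset Printing Implicit Defensive.
Import Order.TTheory GRing.Theory Num.Theory.
Import numFieldNormedType.Exports.
Local Open Scope ring_scope.

Section AdaSpider.
Variables (R : realType) (d n : nat).

Definition enorm (v : 'rV[R]_d) : R := Num.sqrt (\sum_(j < d) v 0 j ^+ 2).

Definition edot (u v : 'rV[R]_d) : R := \sum_(j < d) u 0 j * v 0 j.

Definition full_grad (g : 'I_n -> 'rV[R]_d -> 'rV[R]_d) (x : 'rV[R]_d) :
  'rV[R]_d := (n%:R)^-1 *: \sum_(i < n) g i x.

(* step size gamma_t from S_t = sum_{s<=t} ||nabla_s||^2 *)
Definition ada_gamma (beta0 G0 Ssum : R) : R :=
  1 / (n%:R `^ (4^-1) * beta0 * Num.sqrt (Num.sqrt n%:R * G0 ^+ 2 + Ssum)).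

Variables (T : nat) (g : 'I_n -> 'rV[R]_d -> 'rV[R]_d)
  (x0 : 'rV[R]_d) (beta0 G0 : R) (omega : {ffun 'I_T -> 'I_n}).

(* ada_run t = (x_t, nabla_t, S_t); omega k is the random index i_k
   (only used when k mod n <> 0, k < T). *)
Fixpoint ada_run (t : nat) : 'rV[R]_d * 'rV[R]_d * R :=
  match t with
  | 0 => let g0 := full_grad g x0 in (x0, g0, enorm g0 ^+ 2)
  | t'.+1 =>
      let: (x, gr, Ssum) := ada_run t' in
      let x' := x - ada_gamma beta0 G0 Ssum *: gr in
      let gr' :=
        if (t'.+1 %% n == 0)%N then full_grad g x'
        else match @insub nat (fun k => k < T)%N _ t'.+1 : option 'I_T with
             | Some k => g (omega k) x' - g (omega k) x + gr
             | None => full_grad g x'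
             end in
      (x', gr', Ssum + enorm gr' ^+ 2)
  end.

Definition ada_x (t : nat) : 'rV[R]_d := (ada_run t).1.1.
Definition ada_est (t : nat) : 'rV[R]_d := (ada_run t).1.2.

End AdaSpider.

(* Expectation w.r.t. i.i.d. uniform indices i_0..i_{T-1} in {1..n}
   (= uniform distribution on {ffun 'I_T -> 'I_n}) *)
Definition unif_expect {R : realType} (T n : nat)
  (X : {ffun 'I_T -> 'I_n} -> R) : R :=
  (#|{ffun 'I_T -> 'I_n}|%:R)^-1 * \sum_(w : {ffun 'I_T -> 'I_n}) X w.

(* Main.v *)
Require Import Defs.
From HB Require Import structures.
From mathcomp Require Import all_boot all_order all_algebra all_fingroup.
From mathcomp Require Import all_classical all_reals all_analysis.
From mathcomp Require Import ring lra.
Import Order.TTheory GRing.Theory Num.Theory.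
Import numFieldNormedType.Exports.
Local Open Scope ring_scope.
Set Implicit Arguments. Unset Strict Implicit. Unset Printing Implicit Defensive.

Section Vec.
Variables (R : realType) (d : nat).
Implicit Types (u v w : 'rV[R]_d).

Definition nsq v : R := \sum_(j < d) v 0 j ^+ 2.

Lemma nsq_ge0 v : 0 <= nsq v.
Proof. by apply: sumr_ge0 => j _; rewrite sqr_ge0. Qed.

Lemma enormE v : enorm v = Num.sqrt (nsq v). Proof. by []. Qed.

Lemma enorm_ge0 v : 0 <= enorm v. Proof. exact: sqrtr_ge0. Qed.

Lemma enorm_sq v : enorm v ^+ 2 = nsq v.
Proof. by rewrite enormE sqr_sqrtr // nsq_ge0. Qed.

Lemma edotC u v : edot u v = edot v u.
Proof. by apply: eq_bigr => j _; rewrite mulrC. Qed.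

Lemma edotDr u v w : edot u (v + w) = edot u v + edot u w.
Proof. by rewrite /edot -big_split /=; apply: eq_bigr => j _; rewrite mxE mulrDr. Qed.

Lemma edotZr u c v : edot u (c *: v) = c * edot u v.
Proof. by rewrite /edot mulr_sumr; apply: eq_bigr => j _; rewrite mxE mulrCA. Qed.

Lemma edotNr u v : edot u (- v) = - edot u v.
Proof. by rewrite /edot -sumrN; apply: eq_bigr => j _; rewrite mxE mulrN. Qed.

Lemma edot_sumr (I : Type) (r : seq I) (P : pred I) u (F : I -> 'rV[R]_d) :
  edot u (\sum_(i <- r | P i) F i) = \sum_(i <- r | P i) edot u (F i).
Proof.
rewrite /edot exchange_big /=; apply: eq_bigr => j _.
by rewrite summxE mulr_sumr.
Qed.

Lemma edot0r u : edot u 0 = 0.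
Proof. by rewrite /edot big1 // => j _; rewrite mxE mulr0. Qed.

Lemma edotvv v : edot v v = nsq v.
Proof. by apply: eq_bigr => j _; rewrite expr2. Qed.

Lemma nsqD u v : nsq (u + v) = nsq u + 2 * edot u v + nsq v.
Proof.
rewrite /nsq /edot mulr_sumr -!big_split /=; apply: eq_bigr => j _.
rewrite mxE; ring.
Qed.

Lemma nsqN v : nsq (- v) = nsq v.
Proof. by apply: eq_bigr => j _; rewrite mxE sqrrN. Qed.

Lemma nsqZ c v : nsq (c *: v) = c ^+ 2 * nsq v.
Proof. by rewrite /nsq mulr_sumr; apply: eq_bigr => j _; rewrite mxE exprMn. Qed.

Lemma nsq0 : nsq 0 = 0 :> R.
Proof. by rewrite /nsq big1 // => j _; rewrite mxE expr0n. Qed.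

Lemma nsq_eq0 v : nsq v = 0 -> forall j, v 0 j = 0.
Proof.
move=> h j; have := h; rewrite /nsq (bigD1 j) //= => /eqP.
rewrite paddr_eq0 ?sqr_ge0 ?sumr_ge0 // => [/andP[/eqP h1 _]|k _]; last by rewrite sqr_ge0.
by apply/eqP; rewrite -sqrf_eq0 h1.
Qed.

Lemma edot_sq_le u v : edot u v ^+ 2 <= nsq u * nsq v.
Proof.
have [A0|Apos] := eqVneq (nsq u) 0.
  rewrite /edot big1 ?expr0n ?A0 ?mul0r //= => j _.
  by rewrite (nsq_eq0 A0) mul0r.
have Agt : 0 < nsq u by rewrite lt_def Apos nsq_ge0.
set E := edot u v; set A := nsq u; set B := nsq v.
have h := nsq_ge0 ((E / A) *: u - v).
rewrite nsqD nsqN nsqZ edotNr edotC edotZr -/A -/E -/B in h.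
have e1 : (E / A) ^+ 2 * A + 2 * - (E / A * E) + B = B - E ^+ 2 / A.
  by field; rewrite Apos.
rewrite (edotC v u) -/E e1 subr_ge0 ler_pdivrMr // in h.
by rewrite mulrC.
Qed.

Lemma edot_le u v : edot u v <= enorm u * enorm v.
Proof.
rewrite !enormE -sqrtrM ?nsq_ge0 //.
apply: le_trans (ler_norm _) _.
by rewrite -sqrtr_sqr ler_wsqrtr // edot_sq_le.
Qed.

Lemma enormD u v : enorm (u + v) <= enorm u + enorm v.
Proof.
rewrite -(ler_pXn2r (n:=2)) ?nnegrE ?addr_ge0 ?enorm_ge0 //.
rewrite enorm_sq nsqD sqrrD !enorm_sq.
rewrite lerD2r lerD2l mulr2n; have := edot_le u v; lra.
Qed.

Lemma enormN v : enorm (- v) = enorm v.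
Proof. by rewrite !enormE nsqN. Qed.

Lemma enormZ c v : enorm (c *: v) = `|c| * enorm v.
Proof. by rewrite !enormE nsqZ sqrtrM ?sqr_ge0 // sqrtr_sqr. Qed.

Lemma enorm_sum (I : Type) (r : seq I) (P : pred I) (F : I -> 'rV[R]_d) :
  enorm (\sum_(i <- r | P i) F i) <= \sum_(i <- r | P i) enorm (F i).
Proof.
elim/big_rec2: _ => [|i y1 y2 _ h].
  by rewrite enormE nsq0 sqrtr0.
by apply: le_trans (enormD _ _) _; rewrite lerD2l.
Qed.

End Vec.


Section Algo.
Variables (R : realType) (d n T : nat) (g : 'I_n -> 'rV[R]_d -> 'rV[R]_d)
  (x0 : 'rV[R]_d) (beta0 G0 : R).

Local Notation W := {ffun 'I_T -> 'I_n}.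
Definition run (w : W) t := ada_run g x0 beta0 G0 w t.
Definition X (w : W) t := (run w t).1.1.
Definition N (w : W) t := (run w t).1.2.
Definition S (w : W) t := (run w t).2.
Definition gam s := ada_gamma n beta0 G0 s.
Definition fg := full_grad g.

Lemma X0 w : X w 0 = x0. Proof. by []. Qed.
Lemma N0 w : N w 0 = fg x0. Proof. by []. Qed.
Lemma S0 w : S w 0 = enorm (N w 0) ^+ 2. Proof. by []. Qed.

Lemma XS w t : X w t.+1 = X w t - gam (S w t) *: N w t.
Proof. by rewrite /X /N /S /run /=; case: (ada_run _ _ _ _ _ t) => [[x gr] s]. Qed.

Lemma SS w t : S w t.+1 = S w t + enorm (N w t.+1) ^+ 2.
Proof. by rewrite /X /N /S /run /=; case: (ada_run _ _ _ _ _ t) => [[x gr] s]. Qed.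

Lemma NS w t : N w t.+1 =
  if (t.+1 %% n == 0)%N then fg (X w t.+1)
  else match (insub t.+1 : option 'I_T) with
       | Some k => g (w k) (X w t.+1) - g (w k) (X w t) + N w t
       | None => fg (X w t.+1) end.
Proof. by rewrite /X /N /S /run /=; case: (ada_run _ _ _ _ _ t) => [[x gr] s]. Qed.

Lemma run_dep (w w' : W) t : (forall k : 'I_T, (k <= t)%N -> w k = w' k) ->
  run w t = run w' t.
Proof.
elim: t => [//|t IH] h.
rewrite /run /=.
rewrite -/(run w t) -/(run w' t) IH; last by move=> k kt; apply: h; rewrite (leq_trans kt).
case: (run w' t) => [[x gr] s].
case: insubP => [k _ kE|_] //.
by rewrite h // kE.
Qed.

End Algo.


Section Avg.
Variables (R : realType) (n T : nat).
Local Notation W := {ffun 'I_T -> 'I_n}.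

Definition upd (w : W) (t : 'I_T) (j : 'I_n) : W :=
  [ffun s => if s == t then j else w s].

Lemma upd_same (w : W) t : upd w t (w t) = w.
Proof. by apply/ffunP => s; rewrite ffunE; case: eqP => // ->. Qed.

Lemma upd_upd (w : W) t j j' : upd (upd w t j) t j' = upd w t j'.
Proof. by apply/ffunP => s; rewrite !ffunE; case: eqP. Qed.

Lemma upd_at (w : W) t j : upd w t j t = j.
Proof. by rewrite ffunE eqxx. Qed.

Lemma swap_sum (t : 'I_T) (H : W -> R) (k i : 'I_n) :
  (forall w j, H (upd w t j) = H w) ->
  \sum_(w : W) (w t == k)%:R * H w = \sum_(w : W) (w t == i)%:R * H w.
Proof.
move=> Hinv.
pose tau (w : W) := upd w t (tperm k i (w t)).
have tauK : involutive tau.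
  by move=> w; rewrite /tau upd_upd upd_at tpermK upd_same.
rewrite (reindex_inj (inv_inj tauK)) /=; apply: eq_bigr => w _.
rewrite /tau Hinv upd_at; congr (_%:R * _).
by rewrite -[X in _ == X](tpermR k i) (can_eq (tpermK k i)).
Qed.

Lemma sum_ind (G : 'I_n -> R) (a : 'I_n) : G a = \sum_i (a == i)%:R * G i.
Proof.
rewrite (bigD1 a) //= eqxx mul1r big1 ?addr0 // => i.
by rewrite eq_sym => /negbTE ->; rewrite mul0r.
Qed.

Lemma avg (t : 'I_T) (G : W -> 'I_n -> R) : (0 < n)%N ->
  (forall w j i, G (upd w t j) i = G w i) ->
  \sum_(w : W) G w (w t) = n%:R^-1 * \sum_(w : W) \sum_i G w i.
Proof.
move=> n0 Ginv.
have n0' : n%:R != 0 :> R by rewrite pnatr_eq0 -lt0n.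
rewrite (eq_bigr (fun w : W => \sum_i (w t == i)%:R * G w i)); last first.
  by move=> w _; rewrite -sum_ind.
rewrite exchange_big /= [X in _ = _ * X]exchange_big /= mulr_sumr.
apply: eq_bigr => i _.
have e : \sum_(w : W) G w i = \sum_(w : W) \sum_k (w t == k)%:R * G w i.
  by apply: eq_bigr => w _; exact: (sum_ind (fun _ => G w i) (w t)).
rewrite e [in RHS]exchange_big /=.
rewrite [in RHS](eq_bigr (fun k => \sum_(w : W) (w t == i)%:R * G w i)); last first.
  by move=> k _; apply: (@swap_sum t (fun w => G w i) k i) => w j; exact: Ginv.
by rewrite sumr_const card_ord -(mulr_natr (\sum_(w : W) _) n) mulrCA mulVf // mulr1.
Qed.

End Avg.


Lemma var_le (R : realType) (d n : nat) (u : 'I_n -> 'rV[R]_d) : (0 < n)%N ->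
  \sum_i nsq (u i - n%:R^-1 *: \sum_j u j) <= \sum_i nsq (u i).
Proof.
move=> n0.
have n0' : n%:R != 0 :> R by rewrite pnatr_eq0 -lt0n.
set m := n%:R^-1 *: \sum_j u j.
have hs : \sum_j u j = n%:R *: m by rewrite /m scalerA mulfV // scale1r.
rewrite (eq_bigr (fun i => nsq (u i) - 2 * edot m (u i) + nsq m)); last first.
  by move=> i _; rewrite nsqD nsqN edotNr edotC; ring.
rewrite !big_split /= sumrN -mulr_sumr -edot_sumr hs edotZr edotvv sumr_const card_ord.
rewrite -(mulr_natr (nsq m)); set A := \sum_i _; set B := nsq m.
have : 0 <= B by exact: nsq_ge0.
have : 0 <= n%:R :> R by exact: ler0n.
nra.
Qed.

Section Var.
Variables (R : realType) (d n T : nat) (g : 'I_n -> 'rV[R]_d -> 'rV[R]_d)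
  (x0 : 'rV[R]_d) (beta0 G0 L : R).
Hypothesis hn : (0 < n)%N.
Hypothesis hL : forall i x y, enorm (g i x - g i y) <= L * enorm (x - y).
Local Notation W := {ffun 'I_T -> 'I_n}.
Local Notation X := (X g x0 beta0 G0).
Local Notation N := (N g x0 beta0 G0).
Local Notation fg := (fg g).

Definition err (w : W) t := N w t - fg (X w t).
Definition V t := \sum_(w : W) nsq (err w t).
Definition Q t := \sum_(w : W) nsq (X w t - X w t.-1).

Lemma fgB x y : fg x - fg y = n%:R^-1 *: \sum_i (g i x - g i y).
Proof. by rewrite /fg /full_grad -scalerBr sumrB. Qed.

Lemma err_zero w t : (t %% n == 0)%N -> err w t = 0.
Proof.
case: t => [_|t h]; first by rewrite /err N0 X0 subrr.
by rewrite /err NS h subrr.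
Qed.

Lemma V_zero t : (t %% n == 0)%N -> V t = 0.
Proof. by move=> h; rewrite /V big1 // => w _; rewrite err_zero // nsq0. Qed.

Lemma V_step t : (t.+1 < T)%N -> (t.+1 %% n != 0)%N ->
  V t.+1 <= V t + L ^+ 2 * Q t.+1.
Proof.
move=> ltT hmod.
pose k : 'I_T := Ordinal ltT.
have hN w : N w t.+1 = g (w k) (X w t.+1) - g (w k) (X w t) + N w t.
  rewrite NS (negbTE hmod); case: insubP => [k' _ /= kE|]; last by rewrite /= ltT.
  by have -> : k' = k by apply: val_inj.
pose D (w : W) i := (g i (X w t.+1) - g i (X w t)) - (fg (X w t.+1) - fg (X w t)).
have he w : err w t.+1 = err w t + D w (w k).
  apply/rowP => j; rewrite /err /D hN !mxE; ring.
have inv w j s : (s <= t)%N -> run g x0 beta0 G0 (upd w k j) s = run g x0 beta0 G0 w s.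
  move=> st; apply: run_dep => k' k's; rewrite ffunE.
  case: eqP => // kk; move: k's; rewrite kk /= => /leq_trans /(_ st); by rewrite ltnn.
have invX w j s : (s <= t.+1)%N -> X (upd w k j) s = X w s.
  case: s => [|s] hs; first by [].
  by rewrite !XS /S /N /X !inv.
have invE w j : err (upd w k j) t = err w t.
  by rewrite /err /N invX // inv.
have invD w j i : D (upd w k j) i = D w i by rewrite /D !invX.
rewrite /V (eq_bigr (fun w => nsq (err w t) + 2 * edot (err w t) (D w (w k)) + nsq (D w (w k)))); last first.
  by move=> w _; rewrite he nsqD.
rewrite !big_split /= -mulr_sumr.
rewrite (@avg R n T k (fun w i => edot (err w t) (D w i)) hn); last first.
  by move=> w j i; rewrite invE invD.
rewrite (@avg R n T k (fun w i => nsq (D w i)) hn); last first.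
  by move=> w j i; rewrite invD.
have hsum w : \sum_i edot (err w t) (D w i) = 0.
  rewrite -edot_sumr /D sumrB fgB sumr_const card_ord -scaler_nat scalerA.
  by rewrite mulfV ?pnatr_eq0 -?lt0n // scale1r subrr edot0r.
rewrite [X in 2 * (_ * X)]big1; last by move=> w _; exact: hsum.
rewrite mulr0 mulr0 addr0 lerD2l /Q mulr_sumr [X in _ <= X]mulr_sumr.
apply: ler_sum => w _; rewrite ler_pdivrMl ?ltr0n //.
rewrite /D fgB.
apply: le_trans (var_le (fun i => g i (X w t.+1) - g i (X w t)) hn) _.
have h : \sum_i nsq (g i (X w t.+1) - g i (X w t)) <= \sum_(i < n) L ^+ 2 * nsq (X w t.+1 - X w t.+1.-1).
  apply: ler_sum => i _.
  rewrite -!enorm_sq -exprMn; apply: lerXn2r; rewrite ?nnegrE ?enorm_ge0 //.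
    by apply: le_trans (hL i _ _); rewrite enorm_ge0.
apply: le_trans h _.
by rewrite sumr_const card_ord mulr_natl.
Qed.


Lemma Q_ge0 t : 0 <= Q t.
Proof. by apply: sumr_ge0 => w _; exact: nsq_ge0. Qed.

Lemma V_bound t : (t < T)%N -> V t <= L ^+ 2 * \sum_(k < t %% n) Q (t - k).
Proof.
elim: t => [_|t IH ltT].
  by rewrite V_zero ?mod0n // big_ord0 mulr0.
have [h0|hne] := eqVneq (t.+1 %% n)%N 0%N.
  rewrite V_zero ?h0 // big_ord0 mulr0 //.
apply: le_trans (V_step ltT hne) _.
have hm : (t.+1 %% n = (t %% n).+1)%N.
  by move: hne; rewrite modnS; case: (n %| t.+1)%N.
rewrite hm big_ord_recl subn0 /= mulrDr addrC lerD2l.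
have -> : \sum_(i < t %% n) Q (t.+1 - bump 0 i) = \sum_(i < t %% n) Q (t - i).
  by apply: eq_bigr => i _; rewrite /bump /= add1n subSS.
by apply: IH; apply: ltnW.
Qed.

Lemma shift_sum (F : nat -> R) (k m : nat) : (forall t, 0 <= F t) ->
  \sum_(t < m) (if (k <= t)%N then F (t - k)%N else 0) <= \sum_(t < m) F t.
Proof.
move=> F0.
have -> : \sum_(t < m) (if (k <= t)%N then F (t - k)%N else 0) = \sum_(t < m - k) F t.
  elim: m => [|m IH]; first by rewrite !big_ord0.
  rewrite big_ord_recr /= IH.
  case: (leqP k m) => km.
    by rewrite subSn // big_ord_recr.
  by rewrite addr0 !(eqP (ltnW km)) (_ : m.+1 - k = 0)%N //; apply/eqP; rewrite subn_eq0.
rewrite (big_ord_widen m F (leq_subr k m)) big_mkcond /=.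
by apply: ler_sum => t _; case: ifP => // _; exact: F0.
Qed.

Lemma sumV : \sum_(t < T) V t <= L ^+ 2 * n%:R * \sum_(t < T) Q t.
Proof.
have h1 t : (t < T)%N -> \sum_(k < t %% n) Q (t - k) <=
    \sum_(k < n) (if (k <= t)%N then Q (t - k) else 0).
  move=> _.
  rewrite (big_ord_widen n (fun k => Q (t - k)) (ltnW (ltn_pmod t hn))) big_mkcond /=.
  apply: ler_sum => k _; case: ifP => hk.
    by rewrite (leq_trans (ltnW hk) (leq_mod t n)).
  by case: ifP => // _; exact: Q_ge0.
apply: (@le_trans _ _ (\sum_(t < T) L ^+ 2 * \sum_(k < n) (if (k <= t)%N then Q (t - k) else 0))).
  apply: ler_sum => t _; apply: le_trans (V_bound (ltn_ord t)) _.
  by apply: ler_wpM2l; [exact: sqr_ge0 | exact: h1].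
rewrite -mulr_sumr -mulrA ler_wpM2l ?sqr_ge0 // exchange_big /=.
apply: (@le_trans _ _ (\sum_(k < n) \sum_(t < T) Q t)).
  by apply: ler_sum => k _; apply: shift_sum; exact: Q_ge0.
by rewrite sumr_const card_ord mulr_natl.
Qed.

End Var.


Section Real.
Variable R : realType.

Lemma ln_le_2sqrt (X : R) : 0 <= X -> ln (1 + X) <= 2 * Num.sqrt X.
Proof.
move=> X0; set z := Num.sqrt X.
have z0 : 0 <= z by exact: sqrtr_ge0.
have zz : z ^+ 2 = X by rewrite sqr_sqrtr.
have h1 : 1 + X <= (1 + z) ^+ 2 by rewrite -zz; nra.
apply: (@le_trans _ _ (ln ((1 + z) ^+ 2))).
  by rewrite ler_ln ?posrE //; nra.
rewrite lnXn; last by lra.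
rewrite mulr2n; have := le_ln1Dx (x:=z) ltac:(lra). lra.
Qed.


Lemma poly8 (y : R) : 0 <= y -> 1 + (4 * y ^+ 2 + 2 * y) ^+ 2 <= (1 + y) ^+ 8.
Proof.
move=> y0.
have e : (1 + y) ^+ 8 - (1 + (4 * y ^+ 2 + 2 * y) ^+ 2) =
  8 * y + 24 * y ^+ 2 + 40 * y ^+ 3 + 54 * y ^+ 4 + 56 * y ^+ 5 + 28 * y ^+ 6 + 8 * y ^+ 7 + y ^+ 8.
  by ring.
rewrite -subr_ge0 e.
have h k : 0 <= y ^+ k by exact: exprn_ge0.
have := h 1%N; have := h 2%N; have := h 3%N; have := h 4%N; have := h 5%N;
have := h 6%N; have := h 7%N; have := h 8%N; rewrite expr1; lra.
Qed.

Lemma quad_bound (z y : R) : 0 <= z -> 0 <= y -> z ^+ 2 <= 2 * y ^+ 2 + 4 * y ^+ 2 * z ->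
  z <= 4 * y ^+ 2 + 2 * y.
Proof.
move=> z0 y0 h.
rewrite leNgt; apply/negP => hlt.
have hz : 0 < z by apply: le_lt_trans hlt; nra.
have h1 : 0 < (z - (4 * y ^+ 2 + 2 * y)) * z by apply: mulr_gt0; lra.
have h2 : 0 <= y * (z - 2 * y) by apply: mulr_ge0; nra.
nra.
Qed.

Lemma final_real (al la T n X : R) : 0 <= al -> 0 <= la -> 1 <= T -> 1 <= n -> 0 <= X ->
  X <= T * (al + la * Num.sqrt (T * ln (1 + X))) ^+ 2 ->
  ln (1 + X) <= 8 * ln (1 + n * T * (la + al)).
Proof.
move=> al0 la0 T1 n1 X0 hX.
set l := ln (1 + X).
have l0 : 0 <= l by apply: ln_ge0; lra.
set z := Num.sqrt X.
have z0 : 0 <= z by exact: sqrtr_ge0.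
have zz : z ^+ 2 = X by rewrite sqr_sqrtr.
have lz : l <= 2 * z by exact: ln_le_2sqrt.
set y := n * T * (la + al).
have Tal : T * al <= y.
  have ta : 0 <= T * al by apply: mulr_ge0; lra.
  have tl : 0 <= T * la by apply: mulr_ge0; lra.
  rewrite /y -mulrA mulrDr; nra.
have Tla : T * la <= y.
  have ta : 0 <= T * al by apply: mulr_ge0; lra.
  have tl : 0 <= T * la by apply: mulr_ge0; lra.
  rewrite /y -mulrA mulrDr; nra.
set r := Num.sqrt (T * l).
have rr : r ^+ 2 = T * l by rewrite sqr_sqrtr //; nra.
have r0 : 0 <= r by exact: sqrtr_ge0.
have y0 : 0 <= y by nra.
have h2 : X <= 2 * y ^+ 2 + 2 * y ^+ 2 * l.
  apply: le_trans hX _.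
  have e1 : T * (al + la * r) ^+ 2 <= 2 * (T * al ^+ 2) + 2 * (T * la ^+ 2 * r ^+ 2).
    have q0 : 0 <= T * (al - la * r) ^+ 2 by apply: mulr_ge0; [lra | exact: sqr_ge0].
    have qe : 2 * (T * al ^+ 2) + 2 * (T * la ^+ 2 * r ^+ 2) - T * (al + la * r) ^+ 2 =
       T * (al - la * r) ^+ 2 by ring.
    lra.
  apply: le_trans e1 _; rewrite rr.
  have yy1 : (T * al) ^+ 2 <= y ^+ 2 by apply: lerXn2r; rewrite ?nnegrE //; apply: mulr_ge0; lra.
  have yy2 : (T * la) ^+ 2 <= y ^+ 2 by apply: lerXn2r; rewrite ?nnegrE //; apply: mulr_ge0; lra.
  have e2 : T * al ^+ 2 <= y ^+ 2.
    apply: le_trans yy1; rewrite exprMn -subr_ge0.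
    have -> : T ^+ 2 * al ^+ 2 - T * al ^+ 2 = T * (T - 1) * al ^+ 2 by ring.
    apply: mulr_ge0; [apply: mulr_ge0; lra | exact: sqr_ge0].
  have e3 : T * la ^+ 2 * (T * l) <= y ^+ 2 * l.
    have -> : T * la ^+ 2 * (T * l) = (T * la) ^+ 2 * l by ring.
    by apply: ler_wpM2r.
  lra.
have h3 : z ^+ 2 <= 2 * y ^+ 2 + 4 * y ^+ 2 * z by rewrite zz; nra.
have h4 := quad_bound z0 y0 h3.
have h5 : 1 + X <= (1 + y) ^+ 8.
  apply: le_trans (poly8 y0); rewrite -zz lerD2l; apply: lerXn2r; rewrite ?nnegrE //; nra.
rewrite /l; apply: (@le_trans _ _ (ln ((1 + y) ^+ 8))).
  by rewrite ler_ln ?posrE //; [lra | apply: exprn_gt0; lra].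
by rewrite lnXn ?mulr_natl //; lra.
Qed.

End Real.


Lemma cs_sum (R : realType) (m : nat) (x : 'I_m -> R) :
  (\sum_i x i) ^+ 2 <= m%:R * \sum_i x i ^+ 2.
Proof.
have := edot_sq_le (const_mx 1 : 'rV[R]_m) (\row_i x i).
have -> : edot (const_mx 1 : 'rV[R]_m) (\row_i x i) = \sum_i x i.
  by apply: eq_bigr => i _; rewrite !mxE mul1r.
have -> : nsq (const_mx 1 : 'rV[R]_m) = m%:R.
  by rewrite /nsq (eq_bigr (fun=> 1)) ?sumr_const ?card_ord // => i _; rewrite mxE expr1n.
have -> : nsq (\row_i x i) = \sum_i x i ^+ 2 by apply: eq_bigr => i _; rewrite mxE.
by [].
Qed.

Lemma ln_ratio (R : realType) (a b : R) : 0 < a -> a <= b -> (b - a) / b <= ln (b / a).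
Proof.
move=> a0 ab.
have b0 : 0 < b by exact: lt_le_trans a0 ab.
have hab : 0 < a / b by apply: divr_gt0.
have h := le_ln1Dx (x := a / b - 1) ltac:(lra).
rewrite addrC subrK in h.
have -> : b / a = (a / b)^-1 by rewrite invf_div.
rewrite lnV ?posrE //.
have -> : (b - a) / b = 1 - a / b by rewrite mulrBl mulfV ?gt_eqF.
lra.
Qed.

Section Det.
Variables (R : realType) (d n T : nat) (g : 'I_n -> 'rV[R]_d -> 'rV[R]_d)
  (x0 : 'rV[R]_d) (beta0 G0 L : R).
Hypothesis hn : (0 < n)%N.
Hypothesis hL : forall i x y, enorm (g i x - g i y) <= L * enorm (x - y).
Hypothesis L0 : 0 <= L.
Hypothesis hb : 0 < beta0.
Hypothesis hG : 0 < G0.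
Local Notation W := {ffun 'I_T -> 'I_n}.
Local Notation X := (X g x0 beta0 G0).
Local Notation N := (N g x0 beta0 G0).
Local Notation S := (S g x0 beta0 G0).
Local Notation fg := (fg g).
Local Notation gam := (gam n beta0 G0).

Definition cc := Num.sqrt n%:R * G0 ^+ 2.
Definition qq := n%:R `^ 4^-1 : R.

Lemma n1 : 1 <= n%:R :> R. Proof. by rewrite ler1n. Qed.

Lemma sqn1 : 1 <= Num.sqrt n%:R :> R.
Proof. by rewrite -[X in X <= _]sqrtr1; apply: ler_wsqrtr; exact: n1. Qed.

Lemma cc_gt0 : 0 < cc.
Proof. rewrite /cc; apply: mulr_gt0; [apply: lt_le_trans sqn1 | exact: exprn_gt0] => //. Qed.

Lemma qqE : qq = Num.sqrt (Num.sqrt n%:R).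
Proof.
rewrite /qq (_ : (4^-1 : R) = 2^-1 * 2^-1); last by field.
by rewrite powRrM powR12_sqrt ?ler0n // powR12_sqrt // sqrtr_ge0.
Qed.

Lemma qq1 : 1 <= qq.
Proof. by rewrite qqE -[X in X <= _]sqrtr1; apply: ler_wsqrtr; exact: sqn1. Qed.

Lemma qq2 : qq ^+ 2 = Num.sqrt n%:R.
Proof. by rewrite qqE sqr_sqrtr // sqrtr_ge0. Qed.

Lemma S_sum (w : W) t : S w t = \sum_(s < t.+1) nsq (N w s).
Proof.
elim: t => [|t IH]; first by rewrite big_ord1 S0 enorm_sq.
by rewrite SS big_ord_recr /= IH enorm_sq.
Qed.

Lemma S_ge0 (w : W) t : 0 <= S w t.
Proof. by rewrite S_sum; apply: sumr_ge0 => s _; exact: nsq_ge0. Qed.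

Lemma cS_gt0 (w : W) t : 0 < cc + S w t.
Proof. by apply: ltr_wpDr (S_ge0 w t) cc_gt0. Qed.

Lemma gamE s : gam s = (qq * beta0 * Num.sqrt (cc + s))^-1.
Proof. by rewrite /gam /ada_gamma div1r. Qed.

Lemma gam_ge0 (w : W) t : 0 <= gam (S w t).
Proof.
rewrite gamE invr_ge0; apply: mulr_ge0; last exact: sqrtr_ge0.
by apply: mulr_ge0; [apply: le_trans qq1 | apply: ltW].
Qed.

Lemma step_norm (w : W) t : enorm (X w t.+1 - X w t) = gam (S w t) * enorm (N w t).
Proof.
by rewrite XS addrAC subrr add0r enormN enormZ ger0_norm // gam_ge0.
Qed.

Lemma fg_lip x y : enorm (fg x - fg y) <= L * enorm (x - y).
Proof.
rewrite fgB enormZ ger0_norm ?invr_ge0 ?ler0n //.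
rewrite ler_pdivrMl ?ltr0n //.
apply: le_trans (enorm_sum _ _ _) _.
apply: (@le_trans _ _ (\sum_(i < n) L * enorm (x - y))).
  by apply: ler_sum => i _; exact: hL.
by rewrite sumr_const card_ord mulr_natl.
Qed.


Definition PP (w : W) m := \sum_(s < m) gam (S w s) * enorm (N w s).
Definition bb := enorm (fg x0).

Lemma enorm0 : enorm (0 : 'rV[R]_d) = 0.
Proof. by rewrite enormE nsq0 sqrtr0. Qed.

Lemma inv_bound (w : W) m : enorm (N w m) <= bb + L * PP w m /\ enorm (X w m - x0) <= PP w m.
Proof.
elim: m => [|m [IH1 IH2]].
  by rewrite /PP big_ord0 mulr0 addr0 N0 X0 subrr enorm0.
have hP : PP w m.+1 = PP w m + gam (S w m) * enorm (N w m) by rewrite /PP big_ord_recr.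
have hX : enorm (X w m.+1 - x0) <= PP w m.+1.
  rewrite hP -step_norm.
  have -> : X w m.+1 - x0 = (X w m.+1 - X w m) + (X w m - x0) by rewrite addrA subrK.
  apply: le_trans (enormD _ _) _; rewrite addrC; exact: lerD.
split => //.
have hfg : enorm (fg (X w m.+1)) <= bb + L * PP w m.+1.
  have -> : fg (X w m.+1) = (fg (X w m.+1) - fg x0) + fg x0 by rewrite subrK.
  apply: le_trans (enormD _ _) _; rewrite addrC lerD2l.
  by apply: le_trans (fg_lip _ _) _; apply: ler_wpM2l.
rewrite NS; case: ifP => _ //; case: insubP => [k _ _|_] //.
apply: le_trans (enormD _ _) _.
have := hL (w k) (X w m.+1) (X w m); rewrite step_norm hP mulrDr.
lra.
Qed.

Lemma phi_bound (w : W) m :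
  \sum_(s < m.+1) nsq (N w s) / (cc + S w s) <= ln ((cc + S w m) / cc).
Proof.
elim: m => [|m IH].
  rewrite big_ord1; apply: le_trans (ln_ratio cc_gt0 _); last first.
    by rewrite lerDl S_ge0.
  by rewrite S0 enorm_sq addrAC subrr add0r.
rewrite big_ord_recr /=.
have e : (cc + S w m.+1) / cc = (cc + S w m) / cc * ((cc + S w m.+1) / (cc + S w m)).
  have := cS_gt0 w m; have := cc_gt0 => h1 h2.
  field; rewrite ?(gt_eqF h1) ?(gt_eqF h2) //.
rewrite e lnM ?posrE; last 2 first.
  - by apply: divr_gt0; [exact: cS_gt0 | exact: cc_gt0].
  - by apply: divr_gt0; exact: cS_gt0.
apply: lerD => //.
apply: le_trans (ln_ratio (cS_gt0 w m) _); last by rewrite SS lerD2l lerDl sqr_ge0.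
have -> : cc + S w m.+1 - (cc + S w m) = nsq (N w m.+1) by rewrite SS enorm_sq; ring.
by [].
Qed.

Lemma gam_term (w : W) s :
  gam (S w s) * enorm (N w s) <= beta0^-1 * Num.sqrt (nsq (N w s) / (cc + S w s)).
Proof.
have c0 := cS_gt0 w s.
have sc0 : 0 < Num.sqrt (cc + S w s) by rewrite sqrtr_gt0.
rewrite sqrtrM ?nsq_ge0 // sqrtrV ?(ltW c0) // -enormE gamE.
have q0 : 0 < qq by apply: lt_le_trans qq1.
have -> : (qq * beta0 * Num.sqrt (cc + S w s))^-1 * enorm (N w s) =
   qq^-1 * (beta0^-1 * (enorm (N w s) * (Num.sqrt (cc + S w s))^-1)).
  by field; rewrite ?gt_eqF.
apply: ler_piMl.
  by apply: mulr_ge0; [rewrite invr_ge0 ltW | apply: mulr_ge0; [exact: enorm_ge0 | rewrite invr_ge0 ltW]].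
by rewrite invf_le1 // qq1.
Qed.

Lemma gam2_term (w : W) s :
  gam (S w s) ^+ 2 * nsq (N w s) = (Num.sqrt n%:R * beta0 ^+ 2)^-1 * (nsq (N w s) / (cc + S w s)).
Proof.
have c0 := cS_gt0 w s.
rewrite gamE exprVn !exprMn qq2 sqr_sqrtr ?(ltW c0) //.
have q0 : 0 < Num.sqrt n%:R :> R by apply: lt_le_trans sqn1.
field; rewrite ?gt_eqF //.
Qed.


Definition Phi (w : W) := \sum_(s < T) nsq (N w s) / (cc + S w s).

Lemma sum_sqrt_le (m : nat) (a : 'I_m -> R) : (forall i, 0 <= a i) ->
  \sum_i Num.sqrt (a i) <= Num.sqrt (m%:R * \sum_i a i).
Proof.
move=> a0.
have h := cs_sum (fun i => Num.sqrt (a i)).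
rewrite [X in _ <= _ * X](eq_bigr a) in h; last by move=> i _; rewrite sqr_sqrtr.
rewrite -(ger0_norm (sumr_ge0 _ (fun i _ => sqrtr_ge0 (a i)))) -sqrtr_sqr.
exact: ler_wsqrtr.
Qed.

Lemma Phi_bound (w : W) : (1 <= T)%N ->
  Phi w <= 8 * ln (1 + n%:R * T%:R * (L / (beta0 * G0) + bb / G0)).
Proof.
move=> hT.
set l := ln ((cc + S w T.-1) / cc).
have hPhi : Phi w <= l by have := phi_bound w T.-1; rewrite prednK.
have Phi0 : 0 <= Phi w.
  apply: sumr_ge0 => s _; apply: divr_ge0; [exact: nsq_ge0 | exact: ltW (cS_gt0 w s)].
have l0 : 0 <= l by apply: le_trans hPhi.
set M := bb + L / beta0 * Num.sqrt (T%:R * l).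
have hPP : PP w T <= beta0^-1 * Num.sqrt (T%:R * l).
  apply: (@le_trans _ _ (\sum_(s < T) beta0^-1 * Num.sqrt (nsq (N w s) / (cc + S w s)))).
    by apply: ler_sum => s _; exact: gam_term.
  rewrite -mulr_sumr ler_wpM2l ?invr_ge0 ?(ltW hb) //.
  apply: le_trans (@sum_sqrt_le T (fun s => nsq (N w s) / (cc + S w s)) _) _.
    by move=> s; apply: divr_ge0; [exact: nsq_ge0 | exact: ltW (cS_gt0 w s)].
  by apply: ler_wsqrtr; apply: ler_wpM2l => //; exact: ler0n.
have hN s : (s < T)%N -> enorm (N w s) <= M.
  move=> sT; case: (inv_bound w s) => h _; apply: le_trans h _.
  rewrite /M lerD2l -mulrA; apply: ler_wpM2l => //.
  apply: le_trans hPP; rewrite /PP.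
  rewrite (big_ord_widen T (fun s0 => gam (S w s0) * enorm (N w s0)) (ltnW sT)) big_mkcond /=.
  apply: ler_sum => i _; case: ifP => // _.
  by apply: mulr_ge0; [exact: gam_ge0 | exact: enorm_ge0].
have M0 : 0 <= M by apply: le_trans (hN 0%N hT); exact: enorm_ge0.
have hS : S w T.-1 <= T%:R * M ^+ 2.
  rewrite S_sum prednK //.
  apply: (@le_trans _ _ (\sum_(s < T) M ^+ 2)); last by rewrite sumr_const card_ord mulr_natl.
  apply: ler_sum => s _; rewrite -enorm_sq; apply: lerXn2r; rewrite ?nnegrE ?enorm_ge0 //.
  exact: hN.
set Xv := S w T.-1 / cc.
have eX : (cc + S w T.-1) / cc = 1 + Xv by rewrite /Xv mulrDl mulfV // gt_eqF // cc_gt0.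
have Xv0 : 0 <= Xv by apply: divr_ge0; [exact: S_ge0 | exact: ltW cc_gt0].
have hfin := @final_real R (bb / G0) (L / (beta0 * G0)) T%:R n%:R Xv.
apply: le_trans hPhi _; rewrite /l eX.
apply: hfin => //.
- by apply: divr_ge0; [exact: enorm_ge0 | exact: ltW].
- by apply: divr_ge0 => //; apply: mulr_ge0; exact: ltW.
- by rewrite ler1n.
- exact: n1.
rewrite -eX -/l.
have -> : bb / G0 + L / (beta0 * G0) * Num.sqrt (T%:R * l) = M / G0.
  by rewrite /M; field; rewrite ?gt_eqF.
rewrite /Xv expr_div_n mulrA.
have cG : G0 ^+ 2 <= cc by rewrite /cc ler_peMl ?sqn1 // sqr_ge0.
have G2 : 0 < G0 ^+ 2 by exact: exprn_gt0.
apply: (@le_trans _ _ (T%:R * M ^+ 2 / cc)).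
  by apply: ler_wpM2r => //; rewrite invr_ge0 ltW // cc_gt0.
apply: ler_wpM2l; first by apply: mulr_ge0; [exact: ler0n | exact: sqr_ge0].
by rewrite lef_pV2 ?posrE ?cc_gt0.
Qed.

Lemma sumQ : (1 <= T)%N -> \sum_(t < T) Q T g x0 beta0 G0 t <=
  (Num.sqrt n%:R * beta0 ^+ 2)^-1 * \sum_(w : W) Phi w.
Proof.
move=> hT.
have e : \sum_(t < T) Q T g x0 beta0 G0 t = \sum_(t < T.-1) Q T g x0 beta0 G0 t.+1.
  have gen (F : nat -> R) m : (1 <= m)%N -> \sum_(t < m) F t = F 0%N + \sum_(t < m.-1) F t.+1.
    by case: m => // m _; rewrite big_ord_recl.
  by rewrite gen // {1}/Q big1 ?add0r // => w _; rewrite subrr nsq0.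
rewrite e.
rewrite (big_ord_widen T (fun t => Q T g x0 beta0 G0 t.+1) (leq_pred T)) big_mkcond /=.
rewrite /Phi [X in _ <= _ * X]exchange_big /= mulr_sumr.
apply: ler_sum => t _.
rewrite mulr_sumr.
rewrite [X in _ <= X](eq_bigr (fun w => gam (S w t) ^+ 2 * nsq (N w t))); last first.
  by move=> w _; rewrite gam2_term.
case: ifP => _; last by apply: sumr_ge0 => w _; apply: mulr_ge0; [exact: sqr_ge0 | exact: nsq_ge0].
by rewrite /Q; apply: ler_sum => w _; rewrite -enorm_sq /= step_norm exprMn enorm_sq.
Qed.

End Det.


Lemma cs_fin (R : realType) (I : finType) (x : I -> R) :
  (\sum_i x i) ^+ 2 <= #|I|%:R * \sum_i x i ^+ 2.
Proof.
have h : 0 <= \sum_i \sum_j (x i - x j) ^+ 2.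
  by apply: sumr_ge0 => i _; apply: sumr_ge0 => j _; exact: sqr_ge0.
have inner i : \sum_j (x i - x j) ^+ 2 =
    #|I|%:R * x i ^+ 2 - 2 * x i * \sum_j x j + \sum_j x j ^+ 2.
  rewrite (eq_bigr (fun j => x i ^+ 2 + (- (2 * x i * x j)) + x j ^+ 2)); last first.
    by move=> j _; ring.
  by rewrite !big_split /= sumr_const sumrN -mulr_sumr -(mulr_natl (x i ^+ 2)).
rewrite (eq_bigr _ (fun i _ => inner i)) !big_split /= sumrN -!mulr_sumr -mulr_suml sumr_const in h.
rewrite -mulr_natl in h.
set A := \sum_i x i ^+ 2 in h *; set B := \sum_i x i in h *.
rewrite -mulr_sumr -/B mulr1 -(mulr_natl A) in h.
have e : #|(xpredT : pred I)| = #|I| by apply: eq_card.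
rewrite e in h; rewrite expr2; lra.
Qed.

Section Final.
Variables (R : realType) (d n T : nat) (g : 'I_n -> 'rV[R]_d -> 'rV[R]_d)
  (x0 : 'rV[R]_d) (beta0 G0 L : R).
Hypothesis hn : (0 < n)%N.
Hypothesis hT : (1 <= T)%N.
Hypothesis hL : forall i x y, enorm (g i x - g i y) <= L * enorm (x - y).
Hypothesis L0 : 0 <= L.
Hypothesis hb : 0 < beta0.
Hypothesis hG : 0 < G0.
Local Notation W := {ffun 'I_T -> 'I_n}.

Lemma main_bound :
    unif_expect (fun w : W => \sum_(t < T)
        enorm (ada_est g x0 beta0 G0 w t
               - full_grad g (ada_x g x0 beta0 G0 w t)))
    <= 3 * (L * n%:R `^ (4^-1) * Num.sqrt T%:R / beta0)
         * Num.sqrt (ln (1 + n%:R * T%:R *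
              (L / (beta0 * G0) + enorm (full_grad g x0) / G0))).
Proof.
set K := ln _.
have K0 : 0 <= K.
  apply: ln_ge0; rewrite lerDl; apply: mulr_ge0; first by apply: mulr_ge0; exact: ler0n.
  apply: addr_ge0.
    by apply: divr_ge0 => //; apply: mulr_ge0; exact: ltW.
  by apply: divr_ge0; [exact: enorm_ge0 | exact: ltW].
set Nw := #|W|%:R : R.
have Nw0 : 0 < Nw by rewrite /Nw ltr0n card_ffun card_ord expn_gt0 hn.
have hPhi : \sum_(w : W) Phi g x0 beta0 G0 w <= Nw * (8 * K).
  apply: (@le_trans _ _ (\sum_(w : W) 8 * K)); last first.
    have e : #|(xpredT : pred W)| = #|W| by apply: eq_card.
    by rewrite sumr_const e -(mulr_natl (8 * K)).
  by apply: ler_sum => w _; exact: (Phi_bound x0 hn hL L0 hb hG w hT).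
have hQ := sumQ g x0 hn hb hG hT.
have hV := sumV T x0 beta0 G0 hn hL.
pose sn := Num.sqrt n%:R : R.
have sn0 : 0 < sn by rewrite sqrtr_gt0 ltr0n.
set Z := T%:R * (L ^+ 2 * n%:R * ((sn * beta0 ^+ 2)^-1 * (Nw * (8 * K)))).
have hVs : \sum_(t < T) V T g x0 beta0 G0 t <= L ^+ 2 * n%:R * ((sn * beta0 ^+ 2)^-1 * (Nw * (8 * K))).
  apply: le_trans hV _; apply: ler_wpM2l; first by apply: mulr_ge0; [exact: sqr_ge0 | exact: ler0n].
  apply: le_trans hQ _; apply: ler_wpM2l => //.
  by rewrite invr_ge0; apply: mulr_ge0; [exact: ltW | exact: sqr_ge0].
have V0 t : 0 <= V T g x0 beta0 G0 t by apply: sumr_ge0 => w _; exact: nsq_ge0.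
have hw t : \sum_(w : W) enorm (err g x0 beta0 G0 w t) <= Num.sqrt (Nw * V T g x0 beta0 G0 t).
  have h := cs_fin (fun w : W => enorm (err g x0 beta0 G0 w t)).
  rewrite [X in _ <= _ * X](eq_bigr (fun w => nsq (err g x0 beta0 G0 w t))) in h; last by move=> w _; rewrite enorm_sq.
  rewrite -(ger0_norm (sumr_ge0 _ (fun w _ => enorm_ge0 (err g x0 beta0 G0 w t)))) -sqrtr_sqr.
  exact: ler_wsqrtr.
have hsum : \sum_(w : W) \sum_(t < T) enorm (err g x0 beta0 G0 w t) <= Num.sqrt (Nw * Z).
  rewrite exchange_big /=.
  apply: (@le_trans _ _ (\sum_(t < T) Num.sqrt (Nw * V T g x0 beta0 G0 t))).
    by apply: ler_sum => t _; exact: hw.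
  apply: le_trans (@sum_sqrt_le R T (fun t => Nw * V T g x0 beta0 G0 t) _) _.
    by move=> t; apply: mulr_ge0; [exact: ltW | exact: V0].
  apply: ler_wsqrtr; rewrite -mulr_sumr /Z mulrCA; apply: ler_wpM2l; first exact: ltW.
  by apply: ler_wpM2l; [exact: ler0n | exact: hVs].
rewrite /unif_expect -/Nw.
apply: (@le_trans _ _ (Nw^-1 * Num.sqrt (Nw * Z))).
  by apply: ler_wpM2l; [rewrite invr_ge0 ltW | exact: hsum].
pose Z' := T%:R * (L ^+ 2 * n%:R * ((sn * beta0 ^+ 2)^-1 * (8 * K))).
have eZ : Nw * Z = Nw ^+ 2 * Z' by rewrite /Z /Z'; ring.
rewrite eZ sqrtrM ?sqr_ge0 // sqrtr_sqr ger0_norm ?(ltW Nw0) // mulKf ?gt_eqF //.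
set B := 3 * (L * n%:R `^ 4^-1 * Num.sqrt T%:R / beta0).
have B0 : 0 <= B.
  rewrite /B; apply: mulr_ge0 => //; apply: divr_ge0; last exact: ltW.
  apply: mulr_ge0; last exact: sqrtr_ge0.
  by apply: mulr_ge0 => //; exact: powR_ge0.
have -> : B * Num.sqrt K = Num.sqrt (B ^+ 2 * K) by rewrite sqrtrM ?sqr_ge0 // sqrtr_sqr ger0_norm.
apply: ler_wsqrtr.
have qE : (n%:R `^ 4^-1 : R) ^+ 2 = sn by exact: qq2.
have nE : n%:R = sn ^+ 2 by rewrite sqr_sqrtr // ler0n.
have tE : Num.sqrt T%:R ^+ 2 = T%:R :> R by rewrite sqr_sqrtr // ler0n.
have eB : B ^+ 2 * K = 9 * (L ^+ 2 * sn * T%:R * K / beta0 ^+ 2).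
  rewrite /B !exprMn qE tE; field; rewrite gt_eqF //.
have eZ'' : Z' = 8 * (L ^+ 2 * sn * T%:R * K / beta0 ^+ 2).
  rewrite /Z' nE; field; rewrite ?gt_eqF //.
have P0 : 0 <= L ^+ 2 * sn * T%:R * K / beta0 ^+ 2.
  apply: divr_ge0; last exact: sqr_ge0.
  apply: mulr_ge0 => //; apply: mulr_ge0; last exact: ler0n.
  by apply: mulr_ge0; [exact: sqr_ge0 | exact: ltW].
rewrite eB eZ''; lra.
Qed.

End Final.

Unset Implicit Arguments.

Theorem lemma3 :
  forall R : realType, exists C : R, 0 < C /\
  forall (d n T : nat) (L : R)
    (f : 'I_n -> 'rV[R]_d -> R)
    (g : 'I_n -> 'rV[R]_d -> 'rV[R]_d)
    (x0 : 'rV[R]_d) (beta0 G0 : R),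
    (0 < n)%N -> (1 <= T)%N -> 0 <= L -> 0 < beta0 -> 0 < G0 ->
    (forall i x, differentiable (f i) x /\
       forall h, 'd (f i) x h = edot (g i x) h) ->
    (forall i x y, enorm (g i x - g i y) <= L * enorm (x - y)) ->
    unif_expect (fun w : {ffun 'I_T -> 'I_n} => \sum_(t < T)
        enorm (ada_est g x0 beta0 G0 w t
               - full_grad g (ada_x g x0 beta0 G0 w t)))
    <= C * (L * n%:R `^ (4^-1) * Num.sqrt T%:R / beta0)
         * Num.sqrt (ln (1 + n%:R * T%:R *
              (L / (beta0 * G0) + enorm (full_grad g x0) / G0))).
Proof.
move=> R; exists 3; split; first by rewrite ltr0n.
move=> d n T L f g x0 beta0 G0 hn hT L0 hb hG _ hL.
exact: main_bound.
Qed.
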